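(* Let $\nu$ be a positive Borel measure on $]0,\infty[$ satisfying $$\int_{]0,\infty[} \frac{\nu(\mathrm{d} r)}{1+r} < \infty .$$ For $\omega > 0$ define $$\mathcal{A}_1(\omega) := \omega^2 \int_{]0,\infty[} \frac{\nu(\mathrm{d} r)}{\omega^2 + r^2}, \qquad \mathcal{D}_1(\omega) := \omega \int_{]0,\infty[} \frac{r\,\nu(\mathrm{d} r)}{\omega^2 + r^2}.$$ Then, as $\omega \to \infty$: (1) $\mathcal{A}_1(\omega)/\omega \to 0$ and $\mathcal{D}_1(\omega)/\omega \to 0$; (2) if moreover $M := \int_{]0,\infty[} \nu(\mathrm{d} r) < \infty$, then $\mathcal{A}_1(\omega) \to M$.
   Context: The functions $\mathcal{A}_1(\omega) = \mathrm{Re}\, b(-\mathrm{i}\omega)$ and $\mathcal{D}_1(\omega) = -\mathrm{Im}\, b(-\mathrm{i}\omega)$ are the attenuation and dispersion functions associated with an admissible dispersion-attenuation function $b(p) = p\int_{]0,\infty[} \frac{\nu(\mathrm{d} r)}{p+r}$, where $\nu$ (the dispersion-attenuation spectral measure) is a positive measure satisfying the integrability condition above. *)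

(* Defs.v *)
From HB Require Import structures.
From mathcomp Require Import all_boot all_order all_algebra.
From mathcomp Require Import all_classical all_reals all_analysis.
Set Implicit Arguments. Unset Strict Implicit. Unset Printing Implicit Defensive.
Import Order.TTheory GRing.Theory Num.Theory.
Import numFieldNormedType.Exports.
Local Open Scope classical_set_scope.
Local Open Scope ring_scope.

Definition A1 (R : realType) (nu : {measure set R -> \bar R}) (w : R) : R :=
  w ^+ 2 * Rintegral nu `]0%R, +oo[ (fun r => (w ^+ 2 + r ^+ 2)^-1).

Definition D1 (R : realType) (nu : {measure set R -> \bar R}) (w : R) : R :=
  w * Rintegral nu `]0%R, +oo[ (fun r => r / (w ^+ 2 + r ^+ 2)).

(* Main.v *)
Require Import Defs.
From HB Require Import structures.
From mathcomp Require Import all_boot all_order all_algebra.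
From mathcomp Require Import all_classical all_reals all_analysis.
From mathcomp Require Import measurable_realfun.
From mathcomp Require Import ring lra.
Import Order.TTheory GRing.Theory Num.Theory.
Import numFieldNormedType.Exports.
Local Open Scope classical_set_scope.
Local Open Scope ring_scope.


Lemma contV (R : realType) (w : R) : 0 < w -> continuous (fun r : R => (w^+2 + r^+2)^-1).
Proof.
move=> w0 r.
apply: cvgV.
  by rewrite gt_eqF // ltr_pwDl ?sqr_ge0 // exprn_gt0.
apply: cvgD; first exact: cvg_cst.
rewrite expr2; apply: cvgM; exact: cvg_id.
Qed.

Lemma contM (R : realType) (f g : R -> R) : continuous f -> continuous g -> continuous (fun r => f r * g r).
Proof. move=> cf cg r; apply: cvgM; [exact: cf|exact: cg]. Qed.

Lemma mesM (R : realType) (c : R -> R) (w : R) : 1 <= w -> continuous c ->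
  measurable_fun (`]0%R, +oo[%classic : set R) (fun r => c r * (w^+2 + r^+2)^-1).
Proof.
move=> w1 cc; apply: measurable_funTS; apply: continuous_measurable_fun.
apply: contM => //; apply: contV; exact: lt_le_trans w1.
Qed.

Lemma key (R : realType) (nu : {measure set R -> \bar R}) (f : R -> R -> R) (l g : R -> R) :
  (forall w, 1 <= w -> measurable_fun (`]0%R, +oo[%classic : set R) (f w)) ->
  nu.-integrable (`]0%R, +oo[%classic : set R) (EFin \o g) ->
  (forall w r, 1 <= w -> 0 < r -> `|f w r| <= g r) ->
  (forall r, 0 < r -> f w r @[w --> +oo] --> l r) ->
  Rintegral nu `]0%R, +oo[ (f w) @[w --> +oo] --> Rintegral nu `]0%R, +oo[ l.
Proof.
move=> mf ig fg fl.
have mD : measurable (`]0%R, +oo[%classic : set R) by exact: measurable_itv.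
apply/cvg_pinftyP => u uy.
pose f_ n := EFin \o f (Num.max 1 (u n)).
have Dr r : (`]0%R, +oo[%classic : set R) r -> 0 < r.
  by rewrite /= in_itv /= andbT.
have mU : (Num.max 1 (u n)) @[n --> \oo] --> +oo.
  apply/cvgryPge => A; move/cvgryPge: uy => /(_ A); apply: filterS => n.
  by move=> h; rewrite (le_trans h)// le_max lexx orbT.
have h1 : forall n, measurable_fun (`]0%R, +oo[%classic : set R) (f_ n).
  by move=> n; apply/measurable_EFinP; apply: mf; rewrite le_max lexx.
have h2 : forall r, (`]0%R, +oo[%classic : set R) r -> f_ ^~ r @ \oo --> (EFin \o l) r.
  move=> r /Dr r0; apply: cvg_EFin; first exact: nearW.
  exact: (cvg_comp _ _ mU (fl r r0)).
have h3 : forall r, (`]0%R, +oo[%classic : set R) r -> (EFin \o g) r \is a fin_num.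
  by [].
have h4 : forall n r, (`]0%R, +oo[%classic : set R) r -> (`|f_ n r| <= (EFin \o g) r)%E.
  move=> n r /Dr r0; rewrite /= lee_fin; apply: fg r0; by rewrite le_max lexx.
have DC := @dominated_cvg _ _ _ nu _ mD f_ (EFin \o l) (EFin \o g) h1 h2 h3 ig h4.

have il := lebesgue_integral_dominated_convergence.dominated_integrable mD f_ (EFin \o l) (EFin \o g) h1 h2 ig h4.
have fin : (\int[nu]_(x in (`]0%R, +oo[%classic : set R)) (EFin \o l) x)%E \is a fin_num.
  exact: integrable_fin_num il.
rewrite -(fineK fin) in DC; move/fine_cvg: DC => DC.
apply: cvg_trans DC; apply: near_eq_cvg.
have u1 : \forall n \near \oo, 1 <= u n by move/cvgryPge: uy; apply.
apply: filterS u1 => n u1 /=.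
rewrite /Rintegral /f_ /=.
rewrite (_ : Num.max 1 (u n) = u n) //.
by apply/max_idPr.
Qed.

Lemma divle (R : realType) (a b c k : R) : 0 < b -> 0 < c -> a * c <= k * b -> a * b^-1 <= k * c^-1.
Proof.
move=> b0 c0 h; rewrite -[_ * b^-1]/(a / b) ler_pdivrMr // mulrAC -[_ * c^-1]/(k * b / c).
by rewrite ler_pdivlMr.
Qed.

Lemma geinf1 (R : realType) : \forall w \near (+oo : set_system R), (1 : R) <= w.
Proof. by exists 1; split => // x /ltW. Qed.

Lemma inv0 (R : realType) : (fun w : R => w^-1) x @[x --> +oo] --> 0.
Proof.
apply/(@gtr0_cvgV0 R R _ _ id).
  by apply: filterS (geinf1 R) => w; apply: lt_le_trans.
exact: cvg_id.
Qed.

Section M.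
Variable R : realType.
Implicit Types w r : R.

Lemma den_gt0 w r : 1 <= w -> 0 < w^+2 + r^+2.
Proof. move=> w1; rewrite ltr_pwDl ?sqr_ge0 // exprn_gt0 //; exact: lt_le_trans w1. Qed.

Lemma bnd_a w r : 1 <= w -> 0 < r -> `|w * (w^+2+r^+2)^-1| <= 2 * (1+r)^-1.
Proof.
move=> w1 r0; have d0 := @den_gt0 w r w1.
rewrite ger0_norm; last by rewrite mulr_ge0 ?invr_ge0 ?ltW //; lra.
apply: divle => //; first lra. nra.
Qed.

Lemma bnd_b w r : 1 <= w -> 0 < r -> `|r * (w^+2+r^+2)^-1| <= 2 * (1+r)^-1.
Proof.
move=> w1 r0; have d0 := @den_gt0 w r w1.
rewrite ger0_norm; last by rewrite mulr_ge0 ?invr_ge0 ?ltW //.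
have hw : 1 <= w^+2 by rewrite expr2; nra.
have hr : 0 <= (r - 1)^+2 by rewrite sqr_ge0.
apply: divle => //; first lra. rewrite expr2 in hr. nra.
Qed.

Lemma bnd_c w r : 1 <= w -> 0 < r -> `|w^+2 * (w^+2+r^+2)^-1| <= 1.
Proof.
move=> w1 r0; have d0 := @den_gt0 w r w1.
rewrite ger0_norm; last by apply: mulr_ge0; [exact: sqr_ge0|rewrite invr_ge0 ltW].
rewrite -[1 in X in _ <= X]invr1 -[X in _ <= X]mul1r.
apply: divle => //. nra.
Qed.

End M.

Theorem theorem2 (R : realType) (nu : {measure set R -> \bar R})
  (hnu : (\int[nu]_(r in `]0%R, +oo[) ((1 + r)^-1)%:E < +oo)%E) :
  ((fun w => A1 nu w / w) x @[x --> +oo] --> (0 : R)) /\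
  ((fun w => D1 nu w / w) x @[x --> +oo] --> (0 : R)) /\
  ((nu `]0%R, +oo[%classic < +oo)%E ->
     (A1 nu x @[x --> +oo] --> fine (nu `]0%R, +oo[%classic))).
Proof.
have mD : measurable (`]0%R, +oo[%classic : set R) by exact: measurable_itv.
have Dr r : (`]0%R, +oo[%classic : set R) r -> 0 < r.
  by rewrite /= in_itv /= andbT.
have mh : measurable_fun (`]0%R, +oo[%classic : set R) (fun r => (1 + r)^-1).
  apply: open_continuous_measurable_fun; first exact: rray_open.
  move=> r; rewrite inE => /Dr r0; apply: cvgV; first by rewrite gt_eqF //; lra.
  apply: cvgD; [exact: cvg_cst | exact: cvg_id].
have i1 : nu.-integrable (`]0%R, +oo[%classic : set R) (EFin \o (fun r => (1 + r)^-1)).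
  apply/integrableP; split; first exact/measurable_EFinP.
  apply: le_lt_trans hnu; rewrite le_eqVlt; apply/orP; left; apply/eqP.
  apply: eq_integral => r; rewrite inE => /Dr r0 /=.
  by rewrite ger0_norm // invr_ge0; lra.
have ig : nu.-integrable (`]0%R, +oo[%classic : set R) (EFin \o (fun r => 2 * (1 + r)^-1)).
  apply: (eq_integrable mD _ _ _ (integrableZl mD 2 i1)) => r _ /=.
  by rewrite EFinM.
have Rint0 : Rintegral nu (`]0%R, +oo[%classic : set R) (fun _ => 0) = 0.
  by rewrite Rintegral_cst // mul0r.
have iden w : 1 <= w -> nu.-integrable (`]0%R, +oo[%classic : set R) (EFin \o (fun r => (w^+2 + r^+2)^-1)).
  move=> w1; apply: le_integrable ig => //.
    apply/measurable_EFinP.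
    have cc : continuous (fun _ : R => (1:R)) by move=> x; exact: cvg_cst.
    have := @mesM R (fun _ => 1) w w1 cc.
    move=> h; apply: eq_measurable_fun (h) => r _; exact: mul1r.
  move=> r /Dr r0 /=.
  rewrite lee_fin; apply: (@le_trans _ _ (2 / (1 + r))); last exact: ler_norm.
  apply: le_trans (@bnd_a R w r w1 r0).
  rewrite normrM; apply: ler_peMl => //; rewrite ger0_norm; lra.
have ccst (c : R) : continuous (fun _ : R => c) by move=> x; exact: cvg_cst.
have hsq (w r : R) : 1 <= w -> 0 < r -> w <= w^+2 + r^+2.
  move=> w1 r0; rewrite !expr2; nra.
have Ka : (fun w => Rintegral nu (`]0%R, +oo[%classic : set R) (fun r => w * (w^+2+r^+2)^-1)) x @[x --> +oo] --> 0.
  rewrite -[X in _ --> X]Rint0; apply: (@key R nu (fun w r => w * (w^+2+r^+2)^-1) (fun _ => 0) (fun r => 2*(1+r)^-1)).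
  - move=> w w1; exact: (@mesM R (fun _ => w) w w1 (ccst w)).
  - exact: ig.
  - move=> w r w1 r0; exact: bnd_a.
  - move=> r r0; apply: (squeeze_cvgr _ (cvg_cst 0) (inv0 R)).
    apply: filterS (geinf1 R) => w w1; have d0 := @den_gt0 R w r w1.
    apply/andP; split; first by rewrite mulr_ge0 ?invr_ge0 ?ltW //; lra.
    rewrite -[w^-1]mul1r; apply: divle => //; first lra.
    have := hsq w r w1 r0; rewrite !expr2; nra.
have Kb : (fun w => Rintegral nu (`]0%R, +oo[%classic : set R) (fun r => r * (w^+2+r^+2)^-1)) x @[x --> +oo] --> 0.
  rewrite -[X in _ --> X]Rint0; apply: (@key R nu (fun w r => r * (w^+2+r^+2)^-1) (fun _ => 0) (fun r => 2*(1+r)^-1)).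
  - move=> w w1; exact: (@mesM R id w w1 (fun x => cvg_id)).
  - exact: ig.
  - move=> w r w1 r0; exact: bnd_b.
  - move=> r r0.
    have hi : (fun w : R => r * w^-1) x @[x --> +oo] --> 0.
      rewrite -(mulr0 r); apply: cvgM; [exact: cvg_cst | exact: inv0].
    apply: (squeeze_cvgr _ (cvg_cst 0) hi).
    apply: filterS (geinf1 R) => w w1; have d0 := @den_gt0 R w r w1.
    apply/andP; split; first by rewrite mulr_ge0 ?invr_ge0 ?ltW //.
    apply: divle => //; first lra.
    have := hsq w r w1 r0; nra.
split.
  apply: cvg_trans Ka; apply: near_eq_cvg; apply: filterS (geinf1 R) => w w1 /=.
  rewrite /A1 RintegralZl // ?iden //.
  set I := Rintegral _ _ _; have w0 : w != 0 by rewrite gt_eqF //; lra.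
  by field.
split.
  apply: cvg_trans Kb; apply: near_eq_cvg; apply: filterS (geinf1 R) => w w1 /=.
  rewrite /D1.
  set I := Rintegral _ _ _; have w0 : w != 0 by rewrite gt_eqF //; lra.
  by field.
move=> hM.
have ic : nu.-integrable (`]0%R, +oo[%classic : set R) (EFin \o (fun _ => (1:R))).
  apply/integrableP; split; first exact/measurable_EFinP/measurable_cst.
  have -> : (\int[nu]_(x in (`]0%R, +oo[%classic : set R)) `|(EFin \o (fun _ => (1%R:R))) x|)%E
     = (\int[nu]_(x in (`]0%R, +oo[%classic : set R)) (cst (1%R:R)%:E x))%E.
    by apply: eq_integral => x _; rewrite /= normr1.
  by rewrite integral_cst // mul1e.
have Kc : (fun w => Rintegral nu (`]0%R, +oo[%classic : set R) (fun r => w^+2 * (w^+2+r^+2)^-1)) x @[x --> +oo] --> fine (nu `]0%R, +oo[%classic).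
  have -> : fine (nu `]0%R, +oo[%classic) = Rintegral nu (`]0%R, +oo[%classic : set R) (fun _ => 1).
    by rewrite Rintegral_cst // mul1r.
  apply: (@key R nu (fun w r => w^+2 * (w^+2+r^+2)^-1) (fun _ => 1) (fun _ => 1)).
  - move=> w w1; exact: (@mesM R (fun _ => w^+2) w w1 (ccst _)).
  - exact: ic.
  - move=> w r w1 r0; exact: bnd_c.
  - move=> r r0.
    have hi : (fun w : R => 1 - r^+2 * w^-1) x @[x --> +oo] --> (1:R).
      rewrite -[X in _ --> X](subr0 1) -(mulr0 (r^+2)).
      apply: cvgB; first exact: cvg_cst.
      apply: cvgM; [exact: cvg_cst | exact: inv0].
    apply: (squeeze_cvgr _ hi); last exact: cvg_cst.
    apply: filterS (geinf1 R) => w w1; have d0 := @den_gt0 R w r w1.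
    apply/andP; split; last first.
      apply: le_trans (@bnd_c R w r w1 r0); exact: ler_norm.
    have e : w^+2 * (w^+2+r^+2)^-1 = 1 - r^+2 * (w^+2+r^+2)^-1.
      have dn : w^+2 + r^+2 != 0 by rewrite gt_eqF.
      by apply/eqP; rewrite eq_sym subr_eq -mulrDl divff.
    have h2 : r^+2 * (w^+2+r^+2)^-1 <= r^+2 * w^-1.
      apply: divle => //; first lra.
      have := hsq w r w1 r0; have := sqr_ge0 r; nra.
    rewrite e; lra.
apply: cvg_trans Kc; apply: near_eq_cvg; apply: filterS (geinf1 R) => w w1 /=.
by rewrite /A1 RintegralZl // ?iden.
Qed.
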